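(* For every $(\alpha,\beta,L,M)\in(0,+\infty)^3\times\mathbb{R}$, $$\frac12\Bigl(\frac{9\alpha^2\beta M^2}{2}\Bigr)^{1/3}L-2\cdot6^{2/3}\alpha\le\mu(\alpha,\beta,L,M)\le\mu^*(\alpha,\beta,L,M)\le\frac12\Bigl(\frac{9\alpha^2\beta M^2}{2}\Bigr)^{1/3}L+\frac{3\alpha}{2}.$$
   Context: $S((0,L))$ is the space of step functions with finitely many jumps on $(0,L)$: functions $u=c+\sum_{s\in S_u}J(s)\mathbf{1}_{[s,L)}$ with finite jump set $S_u\subset(0,L)$ and nonzero jumps; $u(0),u(L)$ denote the values near the endpoints. For $u\in S((0,L))$, $\mathcal{G}(\alpha,\beta,f,(0,L),u)=\alpha\,\#(S_u\cap(0,L))+\beta\int_0^L(u(x)-f(x))^2dx$. Then $\mu(\alpha,\beta,L,M)=\min\{\mathcal{G}(\alpha,\beta,Mx,(0,L),u):u\in S((0,L))\}$ and $\mu^*(\alpha,\beta,L,M)=\min\{\mathcal{G}(\alpha,\beta,Mx,(0,L),u):u\in S((0,L)),u(0)=0,u(L)=ML\}$, where $Mx$ denotes the function $x\mapsto Mx$. *)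

(* Defs.v *)
From Stdlib Require Import Reals Lra List.
From Coquelicot Require Import Coquelicot.
Import ListNotations.
Open Scope R_scope.

(* A step function on (0,L) with finitely many jumps is encoded by a constant
   c and a list of (jump position s, jump size J(s)):
     u = c + sum_{(s,J) in js} J * 1_{[s,L)}.
   Well-formedness: positions are pairwise distinct, lie in (0,L), and jumps
   are nonzero; then the jump set S_u is exactly map fst js. *)
Definition step_ok (L : R) (js : list (R * R)) : Prop :=
  NoDup (map fst js) /\
  List.Forall (fun p => 0 < fst p < L /\ snd p <> 0) js.

Definition step_eval (c : R) (js : list (R * R)) (x : R) : R :=
  c + fold_right (fun p acc => (if Rle_dec (fst p) x then snd p else 0) + acc) 0 js.

(* value near 0 is c; value near L is c + sum of all jumps *)
Definition step_left (c : R) (js : list (R * R)) : R := c.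
Definition step_right (c : R) (js : list (R * R)) : R :=
  c + fold_right (fun p acc => snd p + acc) 0 js.

Definition G (alpha beta : R) (f : R -> R) (L : R) (c : R) (js : list (R * R)) : R :=
  alpha * INR (length js) + beta * RInt (fun x => (step_eval c js x - f x) ^ 2) 0 L.

(* mu and mu^*: the (attained) minimum, formalized as the greatest lower bound
   of the set of values of G over admissible step functions. *)
Definition mu (alpha beta L M : R) : R :=
  real (Glb_Rbar (fun y => exists c js, step_ok L js /\
                    y = G alpha beta (fun x => M * x) L c js)).

Definition mu_star (alpha beta L M : R) : R :=
  real (Glb_Rbar (fun y => exists c js, step_ok L js /\
                    step_left c js = 0 /\ step_right c js = M * L /\
                    y = G alpha beta (fun x => M * x) L c js)).

Definition cbrt (x : R) : R := if Rle_dec x 0 then 0 else Rpower x (1/3).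

(* Main.v *)
Require Import Defs.
From Stdlib Require Import Reals Lra Lia List ZArith.
From Coquelicot Require Import Coquelicot.
Import ListNotations.
Open Scope R_scope.

Definition Fp (c M x : R) := c^2 * x - c * M * x^2 + M^2 * x^3 / 3.

Lemma base_int (c M a b : R) :
  is_RInt (fun x => (c - M * x)^2) a b (Fp c M b - Fp c M a).
Proof.
  apply (is_RInt_derive (Fp c M) (fun x => (c - M*x)^2)).
  - intros x _. unfold Fp. auto_derive; [exact I|]. field.
  - intros y _. apply (ex_derive_continuous (K:=R_AbsRing) (V:=R_NormedModule) (fun x => (c - M*x)^2)). auto_derive. exact I.
Qed.

Lemma base_bound (c M a b t : R) : a <= b -> 0 <= t ->
  M^2/12 * (3*t^2*(b-a) - 2*t^3*(0+1)) <= Fp c M b - Fp c M a.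
Proof.
  intros Hab Ht.
  pose (d := b - a). fold d.
  assert (E: Fp c M b - Fp c M a = d*(c - M*(a+b)/2)^2 + M^2*d^3/12).
  { unfold Fp, d; field. }
  rewrite E.
  assert (E2: M^2/12 * (3*t^2*d - 2*t^3*(0+1)) = M^2*d^3/12 - M^2/12*((d-t)^2*(d+2*t))).
  { field. }
  rewrite E2.
  assert (0 <= d). { unfold d; lra. }
  assert (0 <= d*(c - M*(a+b)/2)^2). { apply Rmult_le_pos; [lra| apply pow2_ge_0]. }
  assert (0 <= M^2/12*((d-t)^2*(d+2*t))).
  { apply Rmult_le_pos. apply Rmult_le_pos. apply pow2_ge_0. lra.
    apply Rmult_le_pos. apply pow2_ge_0. lra. }
  lra.
Qed.

Definition inb (a b x : R) : nat :=
  if Rlt_dec a x then if Rlt_dec x b then 1%nat else 0%nat else 0%nat.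

Fixpoint cnt (a b : R) (js : list (R*R)) : nat :=
  match js with [] => 0%nat | p :: r => (inb a b (fst p) + cnt a b r)%nat end.

Lemma cnt_le a b js : (cnt a b js <= length js)%nat.
Proof.
  induction js as [|p r IH]; simpl. lia.
  unfold inb; destruct Rlt_dec; [destruct Rlt_dec|]; lia.
Qed.

Lemma cnt_split a s b js : a < s < b ->
  (cnt a s js + cnt s b js <= cnt a b js)%nat.
Proof.
  intros Hs. induction js as [|p r IH]; simpl. lia.
  unfold inb; repeat destruct Rlt_dec; try lia; lra.
Qed.

Lemma step_cons c p r x :
  step_eval c (p :: r) x = step_eval (c + (if Rle_dec (fst p) x then snd p else 0)) r x.
Proof. unfold step_eval; simpl. ring. Qed.

Lemma LB (M t : R) : 0 <= t -> forall js c a b, a <= b ->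
  exists I, is_RInt (fun x => (step_eval c js x - M*x)^2) a b I /\
    M^2/12 * (3*t^2*(b-a) - 2*t^3*(INR (cnt a b js) + 1)) <= I.
Proof.
  intros Ht js. induction js as [|[s J] r IH]; intros c a b Hab.
  - exists (Fp c M b - Fp c M a). split.
    + apply (is_RInt_ext (fun x => (c - M*x)^2)).
      * intros x _. unfold step_eval; simpl. ring.
      * apply base_int.
    + simpl. apply base_bound; auto.
  - assert (Ht3 : 0 <= t^3) by (apply pow_le; auto).
    assert (HM : 0 <= M^2/12) by (apply Rmult_le_pos; [apply pow2_ge_0|lra]).
    destruct (Rle_dec s a) as [Hsa|Hsa].
    + destruct (IH (c + J) a b Hab) as [I [HI HB]].
      exists I. split.
      * eapply is_RInt_ext; [|exact HI].
        intros x Hx. rewrite Rmin_left in Hx by lra. rewrite Rmax_right in Hx by lra.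
        rewrite step_cons. simpl. destruct Rle_dec; [reflexivity|lra].
      * eapply Rle_trans; [|exact HB]. simpl.
        apply Rmult_le_compat_l; auto.
        rewrite plus_INR.
        assert (0 <= INR (inb a b s)) by apply pos_INR. nra.
    + destruct (Rle_dec b s) as [Hbs|Hbs].
      * destruct (IH c a b Hab) as [I [HI HB]].
        exists I. split.
        -- eapply is_RInt_ext; [|exact HI].
           intros x Hx. rewrite Rmin_left in Hx by lra. rewrite Rmax_right in Hx by lra.
           rewrite step_cons. simpl. destruct Rle_dec; [lra|]. rewrite Rplus_0_r. reflexivity.
        -- eapply Rle_trans; [|exact HB]. simpl.
           apply Rmult_le_compat_l; auto.
           rewrite plus_INR.
           assert (0 <= INR (inb a b s)) by apply pos_INR. nra.
      * destruct (IH c a s ltac:(lra)) as [I1 [HI1 HB1]].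
        destruct (IH (c+J) s b ltac:(lra)) as [I2 [HI2 HB2]].
        exists (I1 + I2). split.
        -- change (is_RInt (fun x => (step_eval c ((s, J) :: r) x - M * x) ^ 2) a b (plus I1 I2)). apply (is_RInt_Chasles _ a s b).
           ++ eapply is_RInt_ext; [|exact HI1].
              intros x Hx. rewrite Rmin_left in Hx by lra. rewrite Rmax_right in Hx by lra.
              rewrite step_cons. simpl. destruct Rle_dec; [lra|]. rewrite Rplus_0_r. reflexivity.
           ++ eapply is_RInt_ext; [|exact HI2].
              intros x Hx. rewrite Rmin_left in Hx by lra. rewrite Rmax_right in Hx by lra.
              rewrite step_cons. simpl. destruct Rle_dec; [reflexivity|lra].
        -- change (cnt a b ((s,J)::r)) with (inb a b s + cnt a b r)%nat.
           assert (Hi : inb a b s = 1%nat).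
           { unfold inb. destruct Rlt_dec; [destruct Rlt_dec|]; first [reflexivity|lra]. }
           rewrite Hi.
           pose proof (cnt_split a s b r ltac:(lra)) as Hc.
           apply le_INR in Hc. rewrite plus_INR in Hc.
           rewrite plus_INR. change (INR 1) with 1.
           assert (E: M^2/12 * (3*t^2*(b-a) - 2*t^3*(1 + INR (cnt a b r) + 1)) =
              M^2/12 * (3*t^2*(s-a) - 2*t^3*(INR (cnt a s r) + 1)) +
              M^2/12 * (3*t^2*(b-s) - 2*t^3*(INR (cnt s b r) + 1)) -
              M^2/12 * (2*t^3*(INR (cnt a b r) - INR (cnt a s r) - INR (cnt s b r)))) by ring.
           
           assert (0 <= M^2/12 * (2*t^3*(INR (cnt a b r) - INR (cnt a s r) - INR (cnt s b r)))).
           { apply Rmult_le_pos; auto. apply Rmult_le_pos; lra. }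
           lra.
Qed.

Fixpoint jl (h M : R) (n : nat) (a : R) : list (R*R) :=
  match n with O => [] | S n' => (a + h/2, M*h) :: jl h M n' (a+h) end.

Lemma jl_in h M n : 0 < h -> forall a p, In p (jl h M n a) ->
  a < fst p < a + INR n * h /\ snd p = M*h.
Proof.
  intros Hh. induction n as [|n IH]; intros a p Hp; simpl in Hp. contradiction.
  rewrite S_INR.
  destruct Hp as [<-|Hp].
  - simpl. assert (0 <= INR n) by apply pos_INR. split; [split|]; nra.
  - destruct (IH (a+h) p Hp) as [[H1 H2] H3]. split; [split|]; auto; lra.
Qed.

Lemma jl_len h M n a : length (jl h M n a) = n.
Proof. revert a; induction n; intros a; simpl; auto. Qed.

Lemma jl_sum h M n a : fold_right (fun p acc => snd p + acc) 0 (jl h M n a) = INR n * (M*h).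
Proof.
  revert a; induction n as [|n IH]; intros a. simpl; ring.
  cbn [jl fold_right snd]. rewrite IH, S_INR. ring.
Qed.

Lemma jl_nodup h M n : 0 < h -> forall a, NoDup (map fst (jl h M n a)).
Proof.
  intros Hh; induction n as [|n IH]; intros a; simpl. constructor.
  constructor; auto.
  intros Hin. apply in_map_iff in Hin. destruct Hin as [p [Hp Hin]].
  destruct (jl_in h M n Hh (a+h) p Hin) as [[H1 _] _]. lra.
Qed.

Lemma fold_zero x js : (forall p, In p js -> x < fst p) ->
  fold_right (fun p acc => (if Rle_dec (fst p) x then snd p else 0) + acc) 0 js = 0.
Proof.
  induction js as [|p r IH]; intros H; simpl. reflexivity.
  rewrite IH. destruct Rle_dec as [Hl|Hl]. specialize (H p (or_introl eq_refl)). lra. ring.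
  intros q Hq. apply H. right; auto.
Qed.

Lemma UB_int h M n : 0 < h -> forall a,
  is_RInt (fun x => (step_eval (M*a) (jl h M n a) x - M*x)^2) a (a + INR n*h)
    (INR n * M^2*h^3/12).
Proof.
  intros Hh. induction n as [|n IH]; intros a.
  - change (INR 0) with 0. cbn [jl]. replace (a + 0*h) with a by ring. replace (0 * M^2*h^3/12) with (@zero R_NormedModule).
    apply is_RInt_point. simpl. unfold zero; simpl. field.
  - replace (a + INR (S n) * h) with (a + h + INR n * h) by (rewrite S_INR; ring).
    replace (INR (S n) * M ^ 2 * h ^ 3 / 12) with
      (plus (plus (Fp (M*a) M (a+h/2) - Fp (M*a) M a)
         (Fp (M*a+M*h) M (a+h) - Fp (M*a+M*h) M (a+h/2))) (INR n * M^2*h^3/12)).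
    2:{ rewrite S_INR. unfold plus; simpl. unfold Fp. field. }
    apply (is_RInt_Chasles (V:=R_NormedModule) _ a (a+h)).
    apply (is_RInt_Chasles (V:=R_NormedModule) _ a (a+h/2)).
    + eapply is_RInt_ext; [|apply (base_int (M*a) M)].
      intros x Hx. rewrite Rmin_left in Hx by lra. rewrite Rmax_right in Hx by lra.
      cbn [jl]. rewrite step_cons. simpl fst. simpl snd.
      destruct Rle_dec; [lra|]. unfold step_eval. rewrite fold_zero. rewrite !Rplus_0_r; reflexivity.
      intros p Hp. destruct (jl_in h M n Hh (a+h) p Hp). lra.
    + eapply is_RInt_ext; [|apply (base_int (M*a+M*h) M)].
      intros x Hx. rewrite Rmin_left in Hx by lra. rewrite Rmax_right in Hx by lra.
      cbn [jl]. rewrite step_cons. simpl fst. simpl snd.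
      destruct Rle_dec; [|lra]. unfold step_eval. rewrite fold_zero. rewrite !Rplus_0_r; reflexivity.
      intros p Hp. destruct (jl_in h M n Hh (a+h) p Hp). lra.
    + eapply is_RInt_ext; [|apply (IH (a+h))].
      intros x Hx.
      assert (0 <= INR n) by apply pos_INR.
      rewrite Rmin_left in Hx by nra. rewrite Rmax_right in Hx by nra.
      cbn [jl]. rewrite step_cons. simpl fst. simpl snd.
      destruct Rle_dec; [|lra]. replace (M*a + M*h) with (M*(a+h)) by ring. reflexivity.
Qed.

Lemma glb_props (E : R -> Prop) K y0 : E y0 -> (forall y, E y -> K <= y) ->
  K <= real (Glb_Rbar E) /\ forall y, E y -> real (Glb_Rbar E) <= y.
Proof.
  intros Hy0 HK. destruct (Glb_Rbar_correct E) as [Hlb Hgr].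
  assert (HK' : Rbar_le (Finite K) (Glb_Rbar E)).
  { apply Hgr. intros x Hx. simpl. apply HK; auto. }
  destruct (Glb_Rbar E) as [r| |] eqn:Eq.
  - simpl in *. split; auto.
  - specialize (Hlb y0 Hy0). simpl in Hlb. contradiction.
  - simpl in HK'. contradiction.
Qed.

Lemma Rpower_pos x y : 0 < Rpower x y.
Proof. unfold Rpower. apply exp_pos. Qed.

Lemma cube_Rpower x : 0 < x -> (Rpower x (1/3))^3 = x.
Proof.
  intros Hx. rewrite <- (Rpower_pow 3) by apply Rpower_pos.
  rewrite Rpower_mult. replace (1/3 * INR 3) with 1 by (simpl; field).
  apply Rpower_1; auto.
Qed.

Lemma cbrt_cube y : 0 < y -> cbrt (y^3) = y.
Proof.
  intros Hy. unfold cbrt. destruct Rle_dec as [H|H].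
  - assert (0 < y^3) by (apply pow_lt; auto). lra.
  - rewrite <- (Rpower_pow 3) by auto. rewrite Rpower_mult.
    replace (INR 3 * (1/3)) with 1 by (simpl; field). apply Rpower_1; auto.
Qed.

Lemma cbrt0 : cbrt 0 = 0.
Proof. unfold cbrt. destruct Rle_dec; auto; lra. Qed.

Lemma G_nonneg alpha beta L M c js : 0 < alpha -> 0 < beta -> 0 < L ->
  0 <= G alpha beta (fun x => M*x) L c js.
Proof.
  intros Ha Hb HL. unfold G.
  destruct (LB M 0 (Rle_refl 0) js c 0 L ltac:(lra)) as [I [HI HB]].
  rewrite (is_RInt_unique _ _ _ _ HI).
  assert (0 <= INR (length js)) by apply pos_INR.
  assert (0 <= I).
  { eapply Rle_trans; [|exact HB]. right. ring. }
  assert (0 <= alpha * INR (length js)) by (apply Rmult_le_pos; lra).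
  assert (0 <= beta * I) by (apply Rmult_le_pos; lra).
  lra.
Qed.

Theorem proposition4p3 (alpha beta L M : R) :
  0 < alpha -> 0 < beta -> 0 < L ->
  / 2 * cbrt (9 * alpha ^ 2 * beta * M ^ 2 / 2) * L - 2 * Rpower 6 (2 / 3) * alpha
    <= mu alpha beta L M /\
  mu alpha beta L M <= mu_star alpha beta L M /\
  mu_star alpha beta L M
    <= / 2 * cbrt (9 * alpha ^ 2 * beta * M ^ 2 / 2) * L + 3 * alpha / 2.
Proof.
  intros Ha Hb HL.
  unfold mu, mu_star.
  set (E1 := fun y => exists c js, step_ok L js /\ y = G alpha beta (fun x => M * x) L c js).
  set (E2 := fun y => exists c js, step_ok L js /\
                    step_left c js = 0 /\ step_right c js = M * L /\
                    y = G alpha beta (fun x => M * x) L c js).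
  assert (HR1 : 1 <= Rpower 6 (2/3)).
  { rewrite <- (Rpower_O 6) by lra. apply Rle_Rpower; lra. }
  assert (Hok0 : step_ok L []).
  { split; constructor. }
  assert (HE1 : E1 (G alpha beta (fun x => M * x) L 0 [])).
  { exists 0, []. split; auto. }
  assert (HE1pos : forall y, E1 y -> 0 <= y).
  { intros y [c [js [_ ->]]]. apply G_nonneg; auto. }
  assert (H21 : forall y, E2 y -> E1 y).
  { intros y [c [js [H1 [_ [_ H2]]]]]. exists c, js. auto. }
  destruct (glb_props E1 0 _ HE1 HE1pos) as [Hm0 Hm1].
  assert (Hmid : forall y0, E2 y0 ->
    real (Glb_Rbar E1) <= real (Glb_Rbar E2) /\ real (Glb_Rbar E2) <= y0).
  { intros y0 Hy0.
    destruct (glb_props E2 (real (Glb_Rbar E1)) y0 Hy0) as [A B].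
    - intros y Hy. apply Hm1. auto.
    - split; auto. }
  destruct (Req_dec M 0) as [HM0|HM0].
  - subst M.
    replace (9 * alpha ^ 2 * beta * 0 ^ 2 / 2) with 0 by field. rewrite cbrt0.
    assert (HE2 : E2 (G alpha beta (fun x => 0 * x) L 0 [])).
    { exists 0, []. split; auto. split; [reflexivity|]. split; auto.
      unfold step_right. simpl. ring. }
    destruct (Hmid _ HE2) as [A B].
    assert (HG : G alpha beta (fun x => 0 * x) L 0 [] = 0).
    { unfold G.
      assert (HI : is_RInt (fun x => (step_eval 0 [] x - 0 * x) ^ 2) 0 L (Fp 0 0 L - Fp 0 0 0)).
      { eapply is_RInt_ext; [|apply (base_int 0 0)].
        intros x _. unfold step_eval. simpl. ring. }
      rewrite (is_RInt_unique _ _ _ _ HI). unfold Fp. simpl length. simpl INR. field. }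
    rewrite HG in B.
    assert (0 < Rpower 6 (2/3)) by apply Rpower_pos.
    split; [|split]; nra.
  - set (t := Rpower (6*alpha/(beta*M^2)) (1/3)).
    assert (HM2 : 0 < M^2).
    { destruct (Rtotal_order M 0) as [H|[H|H]]; [nra|contradiction|nra]. }
    assert (Ht : 0 < t) by apply Rpower_pos.
    assert (Ht3 : t^3 = 6*alpha/(beta*M^2)).
    { apply cube_Rpower. apply Rdiv_lt_0_compat; [lra|]. apply Rmult_lt_0_compat; lra. }
    assert (Hbt : beta * M^2 * t^3 = 6 * alpha).
    { rewrite Ht3. field. split; lra. }
    set (y := beta * M^2 * t^2 / 2).
    assert (Hy : 0 < y).
    { unfold y. assert (0 < t^2) by (apply pow_lt; auto).
      assert (0 < beta * M^2) by (apply Rmult_lt_0_compat; lra). nra. }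
    replace (9 * alpha ^ 2 * beta * M ^ 2 / 2) with (y^3).
    2:{ unfold y. replace (9 * alpha ^ 2 * beta * M ^ 2 / 2) with
          ((6*alpha)^2 * (beta * M^2) / 8) by field.
        rewrite <- Hbt. field. }
    rewrite (cbrt_cube y Hy).
    assert (Hlow : forall z, E1 z -> / 2 * y * L - 2 * Rpower 6 (2 / 3) * alpha <= z).
    { intros z [c [js [_ ->]]]. unfold G.
      destruct (LB M t (Rlt_le _ _ Ht) js c 0 L ltac:(lra)) as [I [HI HB]].
      rewrite (is_RInt_unique _ _ _ _ HI).
      pose proof (cnt_le 0 L js) as Hc. apply le_INR in Hc.
      set (C := INR (cnt 0 L js)) in *.
      assert (Hbb : beta * (M ^ 2 / 12 * (3 * t ^ 2 * (L - 0) - 2 * t ^ 3 * (C + 1))) <= beta * I).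
      { apply Rmult_le_compat_l; lra. }
      assert (Eq : beta * (M ^ 2 / 12 * (3 * t ^ 2 * (L - 0) - 2 * t ^ 3 * (C + 1))) =
                   / 2 * y * L - (beta * M^2 * t^3) * (C + 1) / 6).
      { unfold y. field. }
      rewrite Eq, Hbt in Hbb.
      assert (alpha * C <= alpha * INR (length js)) by (apply Rmult_le_compat_l; lra).
      nra. }
    destruct (glb_props E1 _ _ HE1 Hlow) as [L1 _].
    set (k := L / t).
    assert (Hk : 0 < k) by (apply Rdiv_lt_0_compat; auto).
    destruct (archimed k) as [Hu1 Hu2].
    set (n := Z.to_nat (up k)).
    assert (Hn : INR n = IZR (up k)).
    { unfold n. rewrite INR_IZR_INZ. rewrite Z2Nat.id; auto.
      apply Z.lt_le_incl. apply lt_0_IZR. lra. }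
    assert (Hnpos : 0 < INR n) by lra.
    set (h := L / INR n).
    assert (Hh : 0 < h) by (apply Rdiv_lt_0_compat; auto).
    assert (HnL : 0 + INR n * h = L) by (unfold h; field; lra).
    assert (HE2 : E2 (G alpha beta (fun x => M * x) L 0 (jl h M n 0))).
    { exists 0, (jl h M n 0). split; [|split; [reflexivity|split; [|reflexivity]]].
      - split. apply jl_nodup; auto.
        apply Forall_forall. intros p Hp.
        destruct (jl_in h M n Hh 0 p Hp) as [H1 H2]. rewrite HnL in H1.
        split; auto. rewrite H2. intros E. apply Rmult_integral in E. lra.
      - unfold step_right. rewrite jl_sum. unfold h. field. lra. }
    destruct (Hmid _ HE2) as [A B].
    assert (HG : G alpha beta (fun x => M * x) L 0 (jl h M n 0) =
                 alpha * INR n + beta * (INR n * M^2 * h^3 / 12)).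
    { unfold G. rewrite jl_len. f_equal. f_equal.
      pose proof (UB_int h M n Hh 0) as HI. rewrite Rmult_0_r, HnL in HI.
      apply (is_RInt_unique _ _ _ _ HI). }
    rewrite HG in B.
    assert (Hkn : k < INR n <= k + 1) by lra.
    assert (Hbeta : beta = 6 * alpha / (M^2 * t^3)).
    { rewrite <- Hbt. field. split; lra. }
    assert (EL : alpha * INR n + beta * (INR n * M^2 * h^3 / 12) =
                 alpha * (INR n + k^3 / (2 * INR n ^ 2))).
    { rewrite Hbeta. unfold h, k. field. repeat split; lra. }
    assert (ER : / 2 * y * L + 3 * alpha / 2 = alpha * (3 * k / 2 + 3 / 2)).
    { unfold y, k. rewrite Hbeta. field. split; lra. }
    assert (Hk3 : k^3 <= k * INR n ^ 2).
    { assert (k^2 <= INR n ^ 2) by nra.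
      replace (k^3) with (k * k^2) by ring. apply Rmult_le_compat_l; lra. }
    assert (Hq : k^3 / (2 * INR n ^ 2) <= k / 2).
    { assert (0 < 2 * INR n ^ 2) by nra.
      apply (Rmult_le_reg_r (2 * INR n ^ 2)); auto.
      replace (k ^ 3 / (2 * INR n ^ 2) * (2 * INR n ^ 2)) with (k^3) by (field; lra).
      nra. }
    assert (alpha * (INR n + k^3 / (2 * INR n ^ 2)) <= alpha * (3 * k / 2 + 3 / 2)).
    { apply Rmult_le_compat_l; lra. }
    split; [|split]; lra.
Qed.
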